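(* Let $k$ be an algebraically closed field with $\operatorname{char}(k)\nmid(d+1)!$, $V$ an $n$-dimensional $k$-vector space, $S=\operatorname{Sym}V$. Suppose $f,g\in S_{d+1}$ are nonzero forms with $\langle\nabla g\rangle\subset\langle\nabla f\rangle$ (equivalently $J_g\subset J_f$). Then either $g=\lambda f$ for some $\lambda\in k$, or $f$ is an LDS form, or $f$ is a direct sum.
   Context: $\langle\nabla f\rangle$ is the $k$-span of $\partial f/\partial x_1,\dots,\partial f/\partial x_n$ and $J_f$ is the ideal they generate. A form $f$ is a direct sum if $V=U\oplus W$ and $f=f_1+f_2$ with nonzero $f_1\in\operatorname{Sym}^{d+1}U$, $f_2\in\operatorname{Sym}^{d+1}W$. A form $f$ is LDS if, after a linear change of variables, $f=\sum_{i=1}^{\ell}x_i\,\frac{\partial H(x_{\ell+1},\dots,x_{2\ell})}{\partial x_{\ell+i}}+G(x_{\ell+1},\dots,x_n)$ with $H,G$ forms of degree $d+1$ in $\ell$ and $n-\ell$ variables; here any non-concise form (one expressible in fewer than $n$ variables after a linear change) is regarded as an LDS form (the case $H=0$). *)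

(* Defs.v *)
From HB Require Import structures.
From mathcomp Require Import all_boot all_algebra.
From mathcomp Require Import finmap.
From mathcomp Require Import mpoly.

Set Implicit Arguments.
Unset Strict Implicit.
Unset Printing Implicit Defensive.

Import GRing.Theory.
Local Open Scope ring_scope.

(* Sym V is modelled as {mpoly k[n]} (coordinates x_0,...,x_{n-1} w.r.t. a
   basis of V); forms of degree d+1 are (d.+1).-homog polynomials. *)

Definition lin_change (k : fieldType) (n : nat) (A : 'M[k]_n)
  (p : {mpoly k[n]}) : {mpoly k[n]} :=
  p \mPo [tuple \sum_(j < n) A i j *: 'X_j | i < n].

Definition vars_in (k : fieldType) (n : nat) (P : pred 'I_n)
  (p : {mpoly k[n]}) : Prop :=
  forall m, m \in msupp p -> forall i : 'I_n, ~~ P i -> m i = 0%N.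

Definition grad_span_sub (k : fieldType) (n : nat) (g f : {mpoly k[n]}) : Prop :=
  forall i : 'I_n, exists c : 'I_n -> k,
    g^`M(i) = \sum_(j < n) c j *: f^`M(j).

(* f (of degree d+1) is a direct sum: after a linear change of variables
   (i.e. choosing a basis adapted to V = U (+) W), f = f1 + f2 with f1, f2
   nonzero forms of degree d+1 in complementary sets of variables. *)
Definition direct_sum (k : fieldType) (n d : nat) (f : {mpoly k[n]}) : Prop :=
  exists (A : 'M[k]_n) (P : pred 'I_n) (f1 f2 : {mpoly k[n]}),
    A \in unitmx /\ f1 != 0 /\ f2 != 0 /\
    f1 \is d.+1.-homog /\ f2 \is d.+1.-homog /\
    vars_in P f1 /\ vars_in (predC P) f2 /\
    lin_change A f = f1 + f2.

(* f is LDS: after a linear change of variables,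
   f = \sum_{i<l} x_i * dH/dx_{l+i} + G, with H a form of degree d+1 in
   x_l..x_{2l-1}, G a form of degree d+1 in x_l..x_{n-1}, and l >= 1
   (H = 0 covers the non-concise forms). Indices are 0-based. *)
Definition LDS (k : fieldType) (n d : nat) (f : {mpoly k[n]}) : Prop :=
  exists (l : nat) (A : 'M[k]_n) (H G : {mpoly k[n]}),
    (0 < l)%N /\ (2 * l <= n)%N /\ A \in unitmx /\
    H \is d.+1.-homog /\ G \is d.+1.-homog /\
    vars_in (fun i : 'I_n => (l <= i < 2 * l)%N) H /\
    vars_in (fun i : 'I_n => (l <= i)%N) G /\
        lin_change A f =
          \sum_(i < n | (i < l)%N) \sum_(j < n | j == (l + i)%N :> nat)
              'X_i * H^`M(j) + G.

(* Main.v *)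
Require Import Defs.
From HB Require Import structures.
From mathcomp Require Import all_boot all_fingroup all_algebra.
From mathcomp Require Import finmap.
From mathcomp Require Import mpoly.
From mathcomp Require Import ring.
From mathcomp Require Import zify.

Set Implicit Arguments.
Unset Strict Implicit.
Unset Printing Implicit Defensive.
Import GRing.Theory.
Local Open Scope ring_scope.

Section Chain.
Variables (R : comRingType) (n m : nat) (lq : n.-tuple {mpoly R[m]}) (j : 'I_m).

Definition chainP (p : {mpoly R[n]}) :=
  (p \mPo lq)^`M(j) = \sum_(l < n) (tnth lq l)^`M(j) * (p^`M(l) \mPo lq).

Lemma chainP_add p q : chainP p -> chainP q -> chainP (p + q).
Proof.
rewrite /chainP => hp hq; rewrite raddfD /= mderivD hp hq -big_split /=.
by apply: eq_bigr => l _; rewrite mderivD raddfD /= mulrDr.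
Qed.

Lemma chainP_scale c p : chainP p -> chainP (c *: p).
Proof.
rewrite /chainP => hp; rewrite comp_mpolyZ mderivZ hp scaler_sumr.
by apply: eq_bigr => l _; rewrite mderivZ comp_mpolyZ scalerAr.
Qed.

Lemma chainP_mul p q : chainP p -> chainP q -> chainP (p * q).
Proof.
rewrite /chainP => hp hq; rewrite rmorphM /= mderivM hp hq.
rewrite mulr_suml mulr_sumr -big_split /=.
by apply: eq_bigr => l _; rewrite mderivM rmorphD /= !rmorphM /= mulrDr !mulrA
  [_ * (p \mPo lq)]mulrC.
Qed.

Lemma chainP_1 : chainP 1.
Proof.
rewrite /chainP -mpolyC1 comp_mpolyC mderivC big1 // => l _.
by rewrite mderivC raddf0 mulr0.
Qed.

Lemma chainP_X i : chainP 'X_i.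
Proof.
rewrite /chainP comp_mpolyXU (bigD1 i) //= big1 ?addr0.
  rewrite mderivX mnm1E eqxx -{1}[U_(i)%MM]add0m addmK mpolyX0 scale1r comp_mpoly1 mulr1.
  by rewrite -tnth_nth.
move=> l /negPf hl; rewrite mderivX mnm1E eq_sym hl scale0r raddf0 mulr0 //.
Qed.

Lemma chain_rule p : chainP p.
Proof.
elim/mpolyind: p => [|c mm p _ _ hp].
  by rewrite /chainP raddf0 mderiv0 big1 // => l _; rewrite mderiv0 raddf0 mulr0.
apply: chainP_add => //; apply: chainP_scale.
rewrite mpolyXE_id; apply: (big_ind chainP) => //; first exact: chainP_1.
  exact: chainP_mul.
move=> i _; elim: (mm i) => [|e ih]; first by rewrite expr0; exact: chainP_1.
by rewrite exprS; apply: chainP_mul => //; exact: chainP_X.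
Qed.
End Chain.

Section Basic.
Variables (k : fieldType) (n : nat).

Lemma mnm_le_mdeg (m : 'X_{1..n}) i : (m i <= mdeg m)%N.
Proof. by rewrite mdegE (bigD1 i) //= leq_addr. Qed.

Lemma homog_deriv e (p : {mpoly k[n]}) i :
  p \is e.+1.-homog -> p^`M(i) \is e.-homog.
Proof.
move=> /dhomogP hp; apply/dhomogP => m; rewrite mcoeff_msupp mcoeff_deriv.
case: (eqVneq (p@_(m + U_(i))) 0) => [->|nz]; first by rewrite mul0rn eqxx.
move=> _; have hm : (m + U_(i))%MM \in msupp p by rewrite mcoeff_msupp.
by have : mdeg (m + U_(i))%MM = e.+1 := hp _ hm; rewrite mdegD mdeg1 addn1 => -[].
Qed.

Lemma homog_prod (D : 'I_n -> nat) (F : 'I_n -> {mpoly k[n]}) :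
  (forall i, F i \is (D i).-homog) ->
  \prod_i F i \is (\sum_i D i)%N.-homog.
Proof.
move=> hF; apply: (big_rec2 (fun (dd : nat) (b : {mpoly k[n]}) => b \is dd.-homog)).
  exact: dhomog1.
by move=> i a b _ hb; apply: dhomogM.
Qed.

Lemma homog_lin_change e (A : 'M[k]_n) (p : {mpoly k[n]}) :
  p \is e.-homog -> lin_change A p \is e.-homog.
Proof.
move=> /dhomogP hp; rewrite /lin_change comp_mpolyEX.
rewrite big_seq; apply: rpred_sum => m hm; apply: rpredZ; rewrite comp_mpolyX; have <- : mdeg m = e := hp m hm; rewrite mdegE.
apply: homog_prod => i; rewrite -[X in X.-homog]mul1n; apply: dhomogMn.
rewrite tnth_map tnth_ord_tuple; apply: rpred_sum => j _; apply: rpredZ.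
by rewrite dhomogX; apply/eqP; exact: mdeg1.
Qed.

Lemma euler_gen (p : {mpoly k[n]}) :
  \sum_i 'X_i * p^`M(i) = \sum_(m <- msupp p) ((mdeg m)%:R * p@_m) *: 'X_[m].
Proof.
rewrite /mderiv.
under eq_bigr do rewrite mulr_sumr.
rewrite exchange_big /=; apply: eq_bigr => m _.
rewrite mdegE natr_sum mulr_suml scaler_suml; apply: eq_bigr => i _.
rewrite -scalerAr; case: (posnP (m i)) => [->|hi].
  by rewrite !mul0r !scale0r.
rewrite -mpolyXD addmC submK //; apply/mnm_lepP => j.
by rewrite mnm1E; case: eqP => [<-|] //.
Qed.

Lemma euler e (p : {mpoly k[n]}) : p \is e.-homog ->
  \sum_i 'X_i * p^`M(i) = e%:R *: p.
Proof.
move=> /dhomogP hp; rewrite euler_gen {3}[p]mpolyE scaler_sumr big_seq [RHS]big_seq.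
by apply: eq_bigr => m hm; rewrite hp // scalerA.
Qed.
End Basic.

Section Char.
Variables (k : fieldType) (n d : nat).
Hypothesis Hchar : forall p : nat, p \in [pchar k] -> ~~ (p %| (d.+1)`!)%N.

Lemma natk_neq0 a : (0 < a <= d.+1)%N -> (a%:R : k) != 0.
Proof.
move=> ha; apply/negP => /eqP h0.
have [p hp] := natf0_pchar (proj1 (andP ha)) (introT eqP h0).
have := Hchar hp; rewrite (dvdn_trans _ (dvdn_fact ha)) //.
by rewrite (dvdn_pcharf hp) h0.
Qed.

Lemma deriv0_vars e (Q : pred 'I_n) (p : {mpoly k[n]}) :
  p \is e.-homog -> (e <= d.+1)%N ->
  (forall i, ~~ Q i -> p^`M(i) = 0) -> vars_in Q p.
Proof.
move=> /dhomogP hp he hd m hm i hi; apply/eqP; apply: contraT => hmi.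
have hmd : mdeg m = e := hp m hm.
have hle : (U_(i) <= m)%MM.
  apply/mnm_lepP => j; rewrite mnm1E; case: eqP => [<-|] //.
  by rewrite lt0n.
have := congr1 (mcoeff (m - U_(i))%MM) (hd i hi).
rewrite mcoeff_deriv submK // mcoeff0 mnmBE mnm1E eqxx subn1 prednK ?lt0n //.
move/eqP; rewrite -mulr_natr mulf_eq0 (negbTE (natk_neq0 _)); last first.
  by rewrite lt0n hmi /= (leq_trans _ he) // -hmd mnm_le_mdeg.
by rewrite orbF; move: hm; rewrite mcoeff_msupp => /negbTE ->.
Qed.

Lemma deriv0_zero (p : {mpoly k[n]}) :
  p \is d.+1.-homog -> (forall i, p^`M(i) = 0) -> p = 0.
Proof.
move=> hp hd; have hv := deriv0_vars (Q := pred0) hp (leqnn _) (fun i _ => hd i).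
apply/eqP; apply: contraT => hp0.
have [m hm] : exists m, m \in msupp p.
  by case: (msupp p) (msupp_eq0 p) => [|x s]; [move=> /eqP; rewrite (negbTE hp0)| exists x; rewrite inE eqxx].
have : mdeg m = d.+1 := (dhomogP _ _ _ hp) m hm; rewrite mdegE big1 // => i _; exact: hv.
Qed.
End Char.

Section Transport.
Variables (k : fieldType) (n : nat).

Definition hess (p : {mpoly k[n]}) : 'M[{mpoly k[n]}]_n :=
  \matrix_(i, j) p^`M(i)^`M(j).
Definition cK (K : 'M[k]_n) : 'M[{mpoly k[n]}]_n := map_mx (@mpolyC n k) K.
Definition symK (p : {mpoly k[n]}) (K : 'M[k]_n) :=
  cK K *m hess p = hess p *m (cK K)^T.
Definition tA (A : 'M[k]_n) : n.-tuple {mpoly k[n]} :=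
  [tuple \sum_(j < n) A i j *: 'X_j | i < n].

Lemma tA_deriv A l j : (tnth (tA A) l)^`M(j) = (A l j)%:MP.
Proof.
rewrite tnth_map tnth_ord_tuple raddf_sum (bigD1 j) //= big1 ?addr0.
  by rewrite mderivZ mderivX mnm1E eqxx -{1}[U_(j)%MM]add0m addmK mpolyX0 scale1r alg_mpolyC.
move=> i /negPf hi; rewrite mderivZ mderivX mnm1E hi scale0r scaler0 //.
Qed.

Lemma lin_deriv A p j : (p \mPo tA A)^`M(j) =
  \sum_(l < n) (A l j)%:MP * (p^`M(l) \mPo tA A).
Proof.
rewrite (chain_rule (tA A) j p); apply: eq_bigr => l _.
by rewrite tA_deriv.
Qed.

Lemma lin_changeE A p : lin_change A p = p \mPo tA A.
Proof. by []. Qed.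

Lemma hess_lin A p : hess (lin_change A p) =
  (cK A)^T *m map_mx (comp_mpoly (tA A)) (hess p) *m cK A.
Proof.
apply/matrixP => i j; rewrite !mxE lin_changeE lin_deriv raddf_sum /=.
rewrite (eq_bigr (fun l => (A l i)%:MP * \sum_(m < n) (A m j)%:MP * (p^`M(l)^`M(m) \mPo tA A))); last first.
  by move=> l _; rewrite mderiv_mulC lin_deriv.
rewrite [RHS](eq_bigr (fun m => (\sum_l (cK A)^T i l * map_mx (comp_mpoly (tA A)) (hess p) l m) * cK A m j)); last first.
  by move=> m _; rewrite !mxE.
under [RHS]eq_bigr do rewrite mulr_suml.
rewrite exchange_big /=; apply: eq_bigr => l _; rewrite mulr_sumr.
apply: eq_bigr => m _; rewrite !mxE.
by rewrite [_ * (_ \mPo _)]mulrC mulrA.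
Qed.

Lemma comp_cK A K : map_mx (comp_mpoly (tA A)) (cK K) = cK K.
Proof. by apply/matrixP => i j; rewrite !mxE comp_mpolyC. Qed.

Lemma symK_transport A p K K' : symK p K -> A^T *m K = K' *m A^T ->
  symK (lin_change A p) K'.
Proof.
rewrite /symK hess_lin => hs hA.
set phi := comp_mpoly (tA A).
have hs' : cK K *m map_mx phi (hess p) = map_mx phi (hess p) *m (cK K)^T.
  have := congr1 (map_mx phi) hs; rewrite !map_mxM.
  have -> : map_mx phi (cK K)^T = (cK K)^T.
    by apply/matrixP => i j; rewrite !mxE /phi comp_mpolyC.
  by rewrite comp_cK.
have hA' : (cK A)^T *m cK K = cK K' *m (cK A)^T.
  have := congr1 (map_mx (@mpolyC n k)) hA; rewrite !map_mxM.
  have -> : map_mx (@mpolyC n k) A^T = (cK A)^T by apply/matrixP => i j; rewrite !mxE.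
  by [].
set a := cK A; set Hc := map_mx phi (hess p); set kk := cK K; set kk' := cK K'.
have e1 : kk' *m (a^T *m Hc *m a) = a^T *m (Hc *m kk^T) *m a.
  by rewrite !mulmxA -hA' -(mulmxA a^T kk Hc) hs' !mulmxA.
have h2 : a *m kk'^T = kk^T *m a.
  by have := congr1 trmx hA'; rewrite !trmx_mul trmxK.
by rewrite e1 -[in RHS]mulmxA h2 !mulmxA.
Qed.
End Transport.

Section LinAlg.
Variable k : fieldType.

Lemma row_col_mx m1 m2 n (A1 : 'M[k]_(m1, n)) (A2 : 'M_(m2, n)) (i : 'I_(m1 + m2)) :
  row i (col_mx A1 A2) = match split i with inl i1 => row i1 A1 | inr i2 => row i2 A2 end.
Proof. by apply/rowP => j; rewrite !mxE; case: (split i) => ?; rewrite mxE. Qed.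

Lemma idem_form n (E : 'M[k]_n) : E *m E = E ->
  exists (B : 'M[k]_n) (P : pred 'I_n), B \in unitmx /\
    forall r, row r B *m E = if P r then row r B else 0.
Proof.
move=> hE; set M0 := col_mx E (1%:M - E).
have full : row_full M0.
  rewrite -sub1mx; have -> : (1%:M : 'M[k]_n) = row_mx 1%:M 1%:M *m M0.
    by rewrite mul_row_col !mul1mx addrC subrK.
  exact: submxMl.
exists (rowsub (fullrankfun full) M0), (fun r => (fullrankfun full r < n)%N).
split; first exact: fullrowsub_unit.
move=> r; rewrite row_rowsub row_col_mx; case: splitP => i _.
  by rewrite -row_mul hE.
by rewrite -row_mul mulmxBl mul1mx hE subrr row0.
Qed.

Lemma sqz_form n (N : 'M[k]_n) : N *m N = 0 ->
  exists (l : nat) (B : 'M[k]_n), l = \rank N /\ (2 * l <= n)%N /\ B \in unitmx /\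
    (forall r : 'I_n, ~~ (l <= r < 2 * l)%N -> row r B *m N = 0) /\
    (forall r s : 'I_n, val r = (l + s)%N -> (s < l)%N -> row r B *m N = row s B).
Proof.
move=> hNN; set l := \rank N; set Rb := row_base N.
have [X hX] : exists X, Rb = X *m N.
  by apply/submxP; rewrite /Rb eq_row_base.
have hNk : (N <= kermx N)%MS by apply/sub_kermxP.
set K := kermx N; set D := (K :\: N)%MS; set Y := row_base D.
have hrk : (l + \rank D)%N = (n - l)%N.
  rewrite -(mxrank_ker N) -/K -(mxrank_cap_compl K N); congr (_ + _)%N.
  by rewrite (capmx_idPr hNk).
have hln : (l <= n)%N by apply: rank_leq_col.
have h : (l + (l + \rank D))%N = n by rewrite hrk subnKC.
set B0 := col_mx Rb (col_mx X Y).
exists l, (castmx (h, erefl n) B0); split => //; split.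
  by rewrite -h mul2n -addnn leq_add2l leq_addr.
have rowB : forall r : 'I_n, row r (castmx (h, erefl n) B0) = row (cast_ord (esym h) r) B0.
  by move=> r; apply/rowP => j; rewrite [LHS]mxE castmxE cast_ord_id [RHS]mxE.
split.
  rewrite -row_full_unit row_full_castmx -sub1mx; apply/row_subP => i.
  set u := row i 1%:M.
  have : (u *m N <= Rb)%MS by rewrite /Rb eq_row_base submxMl.
  case/submxP => w hw.
  have hv : (u - w *m X <= K)%MS.
    by apply/sub_kermxP; rewrite mulmxBl hw hX mulmxA subrr.
  have hK : (K <= Rb + (X + Y))%MS.
    rewrite -{1}(addsmx_diff_cap_eq K N) addsmx_sub; apply/andP; split.
      apply: (submx_trans _ (addsmxSr Rb (X + Y)%MS)); apply: (submx_trans _ (addsmxSr X Y)); by rewrite /Y eq_row_base.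
    by rewrite (submx_trans (capmxSr _ _)) // /Rb -{1}(eq_row_base N) addsmxSl.
  have e : (col_mx Rb (col_mx X Y) :=: Rb + (X + Y))%MS.
    apply: eqmx_trans (eqmx_sym (addsmxE _ _)) _.
    exact: adds_eqmx (eqmx_refl _) (eqmx_sym (addsmxE _ _)).
  rewrite /B0 e -[u](subrK (w *m X)); apply: addmx_sub.
    exact: submx_trans hv hK.
  by rewrite (submx_trans (submxMl w X)) // (submx_trans (addsmxSl X Y)) // addsmxSr.
split.
  move=> r; rewrite rowB row_col_mx; case: splitP => i hi.
    by rewrite -row_mul hX -mulmxA hNN mulmx0 row0.
  rewrite row_col_mx; case: splitP => i2 hi2.
    by move: hi hi2 => /= -> ->; rewrite leq_addr /= mul2n -addnn ltn_add2l ltn_ord.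
  move=> _; apply/sub_kermxP; rewrite (submx_trans (row_sub _ _)) //.
  by rewrite /Y eq_row_base diffmxSl.
move=> r s hrs hs; rewrite !rowB !row_col_mx; case: splitP => i hi.
  by move: hi; rewrite /= hrs => hi; move: (ltn_ord i); rewrite -hi ltnNge leq_addr.
rewrite row_col_mx; case: splitP => i2 hi2; last first.
  by move: hi; rewrite /= hrs hi2 => /eqP; rewrite eqn_add2l => /eqP hh; move: hs; rewrite hh ltnNge leq_addr.
rewrite -row_mul -hX; case: splitP => i3 hi3.
  congr row; apply: val_inj; move: hi; rewrite /= hrs hi2 -hi3 => /eqP.
  by rewrite eqn_add2l => /eqP.
by move: hi3; rewrite /= => hi3; move: hs; rewrite hi3 ltnNge leq_addr.
Qed.
End LinAlg.

Lemma nilp_step (R : nzRingType) (M : R) a : M != 0 -> M ^+ a = 0 ->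
  exists j, (0 < j)%N /\ M ^+ j != 0 /\ M ^+ j.+1 = 0.
Proof.
move=> hM; elim: a => [|a ih]; first by move/eqP; rewrite expr0 oner_eq0.
have [ha|ha] := eqVneq (M ^+ a) 0; first by move=> _; exact: ih.
move=> hS; have a0 : (0 < a)%N.
  by case: a ha ih hS => // _ _; rewrite expr1 => h; rewrite h eqxx in hM.
by exists a.
Qed.

Lemma case_split (k : closedFieldType) n' (C : 'M[k]_n'.+1) :
  (exists mu, C = mu%:M) \/
  (exists q, horner_mx C q * horner_mx C q = horner_mx C q /\
     horner_mx C q != 0 /\ horner_mx C q != 1) \/
  (exists q, horner_mx C q != 0 /\ horner_mx C q * horner_mx C q = 0).
Proof.
set p := char_poly C.
have [mu hmu] : exists mu, root p mu.
  by apply/closed_rootP; rewrite size_char_poly.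
have p0 : p != 0 by rewrite monic_neq0 // char_poly_monic.
case: (multiplicity_XsubC p mu) => a [q hq hpq].
rewrite p0 /= in hq.
have a0 : (0 < a)%N.
  case: a hpq => // hpq; move: hmu; rewrite hpq expr0 mulr1 => hr.
  by rewrite hr in hq.
have cop : coprimep (('X - mu%:P) ^+ a) q.
  by apply: coprimep_expl; rewrite coprimep_sym coprimep_XsubC.
case/Bezout_eq1_coprimepP: cop => -[u v] /= huv.
set Xa := ('X - mu%:P) ^+ a in huv hpq.
set e := u * Xa.
have hC : horner_mx C p = 0 by exact: Cayley_Hamilton.
have hid : e * (1 - e) = (u * v) * p.
  by rewrite hpq -huv /e; ring.
set E := horner_mx C e.
have hE : E * E = E.
  have : E * (1 - E) = 0.
    by rewrite -[1](rmorph1 (horner_mx C)) -rmorphB -rmorphM hid rmorphM /= hC mulr0.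
  by rewrite mulrBr mulr1 => /eqP; rewrite subr_eq0 => /eqP.
set M := horner_mx C ('X - mu%:P).
have hM : M = C - mu%:M by rewrite /M rmorphB /= horner_mx_X horner_mx_C.
have [E0|E0] := eqVneq E 0.
  have hXa : Xa = Xa * e + v * p by rewrite hpq -{1}[Xa]mulr1 -huv /e; ring.
  have hMa : M ^+ a = 0.
    have := congr1 (horner_mx C) hXa.
    rewrite rmorphD !rmorphM /= hC mulr0 addr0 -rmorphM /= -/e -/E E0 mulr0 rmorphXn /= -/M => //.
  have [M0|M0] := eqVneq M 0.
    by left; exists mu; apply/eqP; rewrite -subr_eq0 -hM M0.
  right; right; have [j [j0 [hj1 hj2]]] := nilp_step M0 hMa.
  exists (('X - mu%:P) ^+ j); rewrite rmorphXn /= -/M; split => //.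
  rewrite -exprD (_ : (j + j = j.+1 + j.-1)%N) ?exprD ?hj2 ?mul0r //. by case: (j) j0 => // jj _; rewrite addSn addnS.
have [E1|E1] := eqVneq E 1; last by right; left; exists e.
exfalso.
have : eigenvalue C mu by rewrite eigenvalue_root_char.
case/eigenvalueP => w hw w0.
have hwM : w *m M = 0 by rewrite hM mulmxBr hw mul_mx_scalar subrr.
have : w *m E = 0.
  rewrite /E /e mulrC rmorphM rmorphXn /= -/M -(subnKC a0) exprS -!mulmxE.
  by rewrite !mulmxA hwM !mul0mx.
by rewrite E1 mulmx1 => /eqP; rewrite (negbTE w0).
Qed.

Section SymK.
Variables (k : fieldType) (n : nat).
Implicit Types (p : {mpoly k[n]}) (K : 'M[k]_n).

Lemma hess_sym p i j : hess p i j = hess p j i.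
Proof. by rewrite !mxE mderiv_comm. Qed.

Lemma hess_tr p : (hess p)^T = hess p.
Proof. by apply/matrixP => i j; rewrite mxE hess_sym. Qed.

Lemma symK_of p K : (cK K *m hess p)^T = cK K *m hess p -> symK p K.
Proof. by rewrite /symK trmx_mul hess_tr => ->. Qed.

Lemma cKM K1 K2 : cK (K1 *m K2) = cK K1 *m cK K2.
Proof. by rewrite /cK map_mxM. Qed.

Lemma cKD K1 K2 : cK (K1 + K2) = cK K1 + cK K2.
Proof. by rewrite /cK map_mxD. Qed.

Lemma symK_add p K1 K2 : symK p K1 -> symK p K2 -> symK p (K1 + K2).
Proof. by rewrite /symK cKD mulmxDl linearD /= mulmxDr => -> ->. Qed.

Lemma symK_scalar p c : symK p c%:M.
Proof.
rewrite /symK /cK map_scalar_mx tr_scalar_mx.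
by rewrite mul_scalar_mx mul_mx_scalar.
Qed.

Lemma symK_mulC p K1 K2 : symK p K1 -> symK p K2 -> K1 *m K2 = K2 *m K1 ->
  symK p (K1 *m K2).
Proof.
rewrite /symK => h1 h2 hc; rewrite cKM -mulmxA h2 mulmxA h1 -mulmxA -trmx_mul.
by rewrite -!cKM hc.
Qed.

Lemma symK_grad (f g : {mpoly k[n]}) (c : 'I_n -> 'I_n -> k) : (forall i, g^`M(i) = \sum_(j < n) c i j *: f^`M(j)) ->
  symK f (\matrix_(i, j) c i j).
Proof.
move=> hg; apply: symK_of; apply/matrixP => i l.
have e : forall i l, (cK (\matrix_(i, j) c i j) *m hess f) i l = g^`M(i)^`M(l).
  move=> i0 l0; rewrite !mxE hg raddf_sum; apply: eq_bigr => j _.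
  by rewrite /cK !mxE /= mderivZ mul_mpolyC.
by rewrite mxE !e mderiv_comm.
Qed.

Lemma tA_comp A B p : (p \mPo tA A) \mPo tA B = p \mPo tA (A *m B).
Proof.
elim/mpolyind: p => [|c m p _ _ ih]; first by rewrite !raddf0.
rewrite !raddfD /= ih !comp_mpolyZ; congr (_ *: _ + _).
rewrite !comp_mpolyX rmorph_prod; apply: eq_bigr => i _; rewrite rmorphXn; congr (_ ^+ _).
rewrite !tnth_map !tnth_ord_tuple raddf_sum /=.
under eq_bigr do rewrite comp_mpolyZ comp_mpolyXU -tnth_nth tnth_map tnth_ord_tuple scaler_sumr.
rewrite exchange_big /=; apply: eq_bigr => l _; rewrite mxE scaler_suml.
by apply: eq_bigr => j _; rewrite scalerA.
Qed.

Lemma lin_change_comp A B p : lin_change B (lin_change A p) = lin_change (A *m B) p.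
Proof. exact: tA_comp. Qed.

End SymK.

Section SymKPoly.
Variables (k : fieldType) (n' : nat).
Local Notation n := n'.+1.

Lemma symK_poly (p : {mpoly k[n]}) (C : 'M[k]_n) q : symK p C -> symK p (horner_mx C q).
Proof.
move=> hC; elim/poly_ind: q => [|q c ih].
  by rewrite rmorph0 -(scale0r (1%:M : 'M[k]_n)) scalemx1; exact: symK_scalar.
rewrite rmorphD rmorphM /= horner_mx_X horner_mx_C; apply: symK_add; last first.
  exact: symK_scalar.
rewrite -mulmxE; apply: symK_mulC => //.
by rewrite !mulmxE; apply/esym/comm_mx_horner.
Qed.
End SymKPoly.

Section Mats.
Variables (k : fieldType) (n : nat).

Definition Smx (l : nat) : 'M[k]_n :=
  \matrix_(r, s) ((val r == l + s)%N && (s < l)%N)%:R.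
Definition Dmx (P : pred 'I_n) : 'M[k]_n := \matrix_(r, s) ((r == s) && P r)%:R.

Lemma Smx_rel l (B N : 'M[k]_n) :
  (forall r : 'I_n, ~~ (l <= r < 2 * l)%N -> row r B *m N = 0) ->
  (forall r s : 'I_n, val r = (l + s)%N -> (s < l)%N -> row r B *m N = row s B) ->
  B *m N = Smx l *m B.
Proof.
move=> h1 h2; apply/row_matrixP => r; rewrite !row_mul [in RHS]mulmx_sum_row.
have [hr|hr] := boolP (l <= r < 2 * l)%N.
  have hs : (r - l < n)%N by rewrite (leq_ltn_trans (leq_subr _ _)).
  set s := Ordinal hs.
  have e : val r = (l + s)%N by rewrite /= subnKC //; case/andP: hr.
  have sl : (s < l)%N by rewrite /= ltn_subLR; [rewrite addnn -mul2n; case/andP: hr|case/andP: hr].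
  rewrite (h2 r s e sl) (bigD1 s) //= big1 ?addr0.
    by rewrite !mxE e eqxx sl scale1r.
  move=> j hj; rewrite !mxE e eqn_add2l.
  by rewrite (_ : (s == j :> nat) = false) ?scale0r // (inj_eq val_inj) eq_sym (negbTE hj).
rewrite h1 // big1 // => j _; rewrite !mxE.
case: eqP => [e|]; last by rewrite scale0r.
case: (ltnP j l) => hj; last by rewrite scale0r.
by move: hr; rewrite e leq_addr /= mul2n -addnn ltn_add2l hj.
Qed.

Lemma Dmx_rel (P : pred 'I_n) (B E : 'M[k]_n) :
  (forall r, row r B *m E = if P r then row r B else 0) ->
  B *m E = Dmx P *m B.
Proof.
move=> h; apply/row_matrixP => r; rewrite !row_mul [in RHS]mulmx_sum_row h.
rewrite (bigD1 r) //= big1 ?addr0.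
  by rewrite !mxE eqxx /=; case: (P r); rewrite ?scale1r ?scale0r.
by move=> j hj; rewrite !mxE eq_sym (negbTE hj) scale0r.
Qed.

Lemma cK_S_mul l (M : 'M[{mpoly k[n]}]_n) r c :
  (cK (Smx l) *m M) r c = \sum_(s : 'I_n | (val r == l + s)%N && (s < l)%N) M s c.
Proof.
rewrite mxE [RHS]big_mkcond /=; apply: eq_bigr => s _; rewrite !mxE.
by case: (_ && _); rewrite ?mul1r ?mul0r.
Qed.

Lemma cK_S_in l (M : 'M[{mpoly k[n]}]_n) (r s c : 'I_n) :
  val r = (l + s)%N -> (s < l)%N -> (cK (Smx l) *m M) r c = M s c.
Proof.
move=> e sl; rewrite cK_S_mul (bigD1 s) /= ?e ?eqxx ?sl // big1 ?addr0 //.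
move=> j /andP[/andP[hj _] hjs]; move: hj; rewrite eqn_add2l => /eqP hj.
by move: hjs; rewrite (_ : s = j) ?eqxx //; apply: val_inj.
Qed.

Lemma cK_S_out l (M : 'M[{mpoly k[n]}]_n) (r c : 'I_n) :
  ~~ (l <= r < 2 * l)%N -> (cK (Smx l) *m M) r c = 0.
Proof.
move=> hr; rewrite cK_S_mul big1 // => j /andP[/eqP e hj].
by move: hr; rewrite e leq_addr /= mul2n -addnn ltn_add2l hj.
Qed.

Lemma symK_T (q : {mpoly k[n]}) K (r c : 'I_n) : symK q K ->
  (cK K *m hess q) r c = (cK K *m hess q) c r.
Proof.
move=> hs; rewrite {1}hs -{1}(hess_tr q) -trmx_mul mxE //.
Qed.

Lemma S_conseq l (q : {mpoly k[n]}) : symK q (Smx l) -> (2 * l <= n)%N ->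
  [/\ (forall i j : 'I_n, (i < l)%N -> (j < l)%N -> q^`M(i)^`M(j) = 0),
      (forall i j : 'I_n, (i < l)%N -> (2 * l <= j)%N -> q^`M(i)^`M(j) = 0) &
      (forall i j ri rj : 'I_n, (i < l)%N -> (j < l)%N -> val ri = (l + i)%N ->
          val rj = (l + j)%N -> q^`M(i)^`M(rj) = q^`M(j)^`M(ri))].
Proof.
move=> hs hl.
have ord_sh : forall i : 'I_n, (i < l)%N -> (l + i < n)%N.
  by move=> i hi; rewrite (leq_trans _ hl) // mul2n -addnn ltn_add2l.
have hin : forall i : 'I_n, ~~ (l <= i < 2 * l)%N -> forall c, (cK (Smx l) *m hess q) i c = 0.
  by move=> i hi c; apply: cK_S_out.
split.
- move=> i j hi hj; have := symK_T (Ordinal (ord_sh i hi)) j hs.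
  rewrite (@cK_S_in _ _ (Ordinal (ord_sh i hi)) i) // hin; first by rewrite mxE.
  by rewrite negb_and -ltnNge hj.
- move=> i j hi hj; have := symK_T (Ordinal (ord_sh i hi)) j hs.
  rewrite (@cK_S_in _ _ (Ordinal (ord_sh i hi)) i) // hin; first by rewrite mxE.
  by rewrite negb_and -!ltnNge; apply/orP; right; rewrite ltnS.
- move=> i j ri rj hi hj ei ej; have := symK_T ri rj hs.
  by rewrite (@cK_S_in _ _ ri i) // (@cK_S_in _ _ rj j) // !mxE.
Qed.

Lemma D_conseq (P : pred 'I_n) (q : {mpoly k[n]}) : symK q (Dmx P) ->
  forall i j : 'I_n, P i -> ~~ P j -> q^`M(i)^`M(j) = 0.
Proof.
move=> hs i j hi hj; have := symK_T i j hs.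
have e : forall r c, (cK (Dmx P) *m hess q) r c = if P r then hess q r c else 0.
  move=> r c; rewrite mxE (bigD1 r) //= big1 ?addr0.
    by rewrite !mxE eqxx /=; case: (P r); rewrite ?mul1r ?mul0r.
  by move=> t ht; rewrite !mxE eq_sym (negbTE ht) mul0r.
by rewrite !e hi (negbTE hj) mxE.
Qed.
End Mats.

Section Build.
Variables (k : fieldType) (n' d : nat).
Local Notation n := n'.+1.
Hypothesis Hchar : forall p : nat, p \in [pchar k] -> ~~ (p %| (d.+1)`!)%N.

Lemma mderivXU (t j : 'I_n) : ('X_t : {mpoly k[n]})^`M(j) = (t == j)%:R.
Proof.
rewrite mderivX mnm1E; case: eqP => [->|_]; last by rewrite scale0r.
by rewrite -{1}[U_(j)%MM]add0m addmK mpolyX0 scale1r.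
Qed.

Lemma mderiv_sum (I : finType) (P : pred I) (F : I -> {mpoly k[n]}) j :
  (\sum_(i | P i) F i)^`M(j) = \sum_(i | P i) (F i)^`M(j).
Proof. exact: raddf_sum. Qed.

Lemma X_homog (t : 'I_n) : ('X_t : {mpoly k[n]}) \is 1.-homog.
Proof. by rewrite dhomogX; apply/eqP; exact: mdeg1. Qed.

Lemma LDS_build (q : {mpoly k[n]}) l : q \is d.+1.-homog -> (0 < l)%N -> (2 * l <= n)%N ->
  (forall i j : 'I_n, (i < l)%N -> (j < l)%N -> q^`M(i)^`M(j) = 0) ->
  (forall i j : 'I_n, (i < l)%N -> (2 * l <= j)%N -> q^`M(i)^`M(j) = 0) ->
  (forall i j ri rj : 'I_n, (i < l)%N -> (j < l)%N -> val ri = (l + i)%N ->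
          val rj = (l + j)%N -> q^`M(i)^`M(rj) = q^`M(j)^`M(ri)) ->
  exists H G : {mpoly k[n]}, H \is d.+1.-homog /\ G \is d.+1.-homog /\
    vars_in (fun i : 'I_n => (l <= i < 2 * l)%N) H /\
    vars_in (fun i : 'I_n => (l <= i)%N) G /\
    q = \sum_(i < n | (i < l)%N) \sum_(j < n | j == (l + i)%N :> nat)
              'X_i * H^`M(j) + G.
Proof.
move=> hq l0 hl ha hb hc.
have hqd : forall i, q^`M(i) \is d.-homog by move=> i; apply: homog_deriv.
set c := ((d.+1)%:R : k)^-1.
have hc0 : ((d.+1)%:R : k) != 0 by apply: (natk_neq0 Hchar); rewrite ltn0Sn leqnn.
pose sh (t : 'I_n) : 'I_n := inord (t - l).
have sh_val : forall t : 'I_n, (l <= t < 2 * l)%N -> val (sh t) = (t - l)%N /\ (sh t < l)%N.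
  move=> t /andP[h1 h2].
  have hbb : (t - l < n'.+1)%N by rewrite (leq_ltn_trans (leq_subr _ _)).
  have e : val (sh t) = (t - l)%N by apply: inordK.
  split; first exact: e.
  by rewrite -[nat_of_ord (sh t)]/(val (sh t)) e ltn_subLR // addnn -mul2n.
set H := c *: \sum_(t < n | (l <= t < 2 * l)%N) 'X_t * q^`M(sh t).
set G := q - \sum_(i < n | (i < l)%N) 'X_i * q^`M(i).
have KH : forall i j : 'I_n, (i < l)%N -> val j = (l + i)%N -> H^`M(j) = q^`M(i).
  move=> i j hi ej.
  rewrite /H mderivZ mderiv_sum.
  under eq_bigr do rewrite mderivM mderivXU.
  rewrite big_split /= (bigD1 j) /=; last by rewrite ej leq_addr /= mul2n -addnn ltn_add2l.
  rewrite eqxx mul1r big1 ?addr0; last by move=> t0 /andP[_ /negbTE ->]; rewrite mul0r.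
  have -> : sh j = i.
    have hj : (l <= j < 2 * l)%N by rewrite ej leq_addr /= mul2n -addnn ltn_add2l.
    by apply: val_inj; have [-> _] := sh_val j hj; rewrite ej addKn.
  have -> : \sum_(t < n | (l <= t < 2 * l)%N) 'X_t * q^`M(sh t)^`M(j) =
            \sum_(t < n) 'X_t * q^`M(i)^`M(t).
    rewrite [RHS](bigID (fun t : 'I_n => (l <= t < 2 * l)%N)) /= [X in _ = _ + X]big1 ?addr0.
      apply: eq_bigr => t ht; have [e1 e2] := sh_val t ht.
      rewrite (hc (sh t) i t j) //; rewrite e1 subnKC //; by case/andP: ht.
    move=> t; rewrite negb_and -ltnNge -leqNgt => /orP[ht|ht].
      by rewrite ha // mulr0.
    by rewrite hb // mulr0.
  rewrite (euler (hqd i)) -{1}[q^`M(i)]scale1r -scalerDl /c scalerA.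
  by rewrite -natr1 addrC mulVf ?scale1r // addrC natr1.
exists H, G; split.
  apply: rpredZ; apply: rpred_sum => t _; exact: (dhomogM (X_homog t) (hqd _)).
split.
  apply: rpredB => //; apply: rpred_sum => t _; exact: (dhomogM (X_homog t) (hqd _)).
split.
  apply: (deriv0_vars Hchar (e := d.+1)) => //.
    apply: rpredZ; apply: rpred_sum => t _; exact: (dhomogM (X_homog t) (hqd _)).
  move=> t0 ht0; rewrite /H mderivZ mderiv_sum big1 ?scaler0 // => t ht.
  rewrite mderivM mderivXU (_ : (t == t0) = false); last first.
    by apply/negbTE; apply: contraNneq ht0 => <-.
  rewrite mul0r add0r; have [_ e2] := sh_val t ht.
  move: ht0; rewrite negb_and -ltnNge -leqNgt => /orP[h0|h0].
    by rewrite ha // mulr0.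
  by rewrite hb // mulr0.
split.
  apply: (deriv0_vars Hchar (e := d.+1)) => //.
    apply: rpredB => //; apply: rpred_sum => t _; exact: (dhomogM (X_homog t) (hqd _)).
  move=> t0; rewrite -ltnNge => ht0; rewrite /G mderivB mderiv_sum.
  under eq_bigr do rewrite mderivM mderivXU.
  rewrite big_split /= (bigD1 t0) //= eqxx mul1r big1 ?addr0; last first.
    by move=> t /andP[_ /negbTE ->]; rewrite mul0r.
  rewrite big1 ?addr0 ?subrr // => t ht; by rewrite ha // mulr0.
have -> : \sum_(i < n | (i < l)%N) \sum_(j < n | j == (l + i)%N :> nat) 'X_i * H^`M(j)
    = \sum_(i < n | (i < l)%N) 'X_i * q^`M(i).
  apply: eq_bigr => i hi.
  have hli : (l + i < n)%N by rewrite (leq_trans _ hl) // mul2n -addnn ltn_add2l.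
  rewrite (big_pred1 (Ordinal hli)) /=; last by move=> j; rewrite /= -(inj_eq val_inj).
  by rewrite (KH i (Ordinal hli)).
by rewrite /G addrC subrK.
Qed.
End Build.

Section DS.
Variables (k : fieldType) (n d : nat).
Hypothesis Hchar : forall p : nat, p \in [pchar k] -> ~~ (p %| (d.+1)`!)%N.

Lemma msupp_filt (s : seq 'X_{1..n}) (R : pred 'X_{1..n}) (c : 'X_{1..n} -> k) m :
  m \in msupp (\sum_(m' <- s | R m') c m' *: ('X_[m'] : {mpoly k[n]})) -> (m \in s) && R m.
Proof.
apply: contraTT => hm; rewrite mcoeff_msupp negbK raddf_sum /= big_seq_cond big1 // => m' /andP[hs hR].
rewrite mcoeffZ mcoeffX; case: eqP => [e|]; last by rewrite mulr0.
by move: hm; rewrite -e hs hR.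
Qed.

Lemma le_U (m : 'X_{1..n}) i : (0 < m i)%N -> (U_(i) <= m)%MM.
Proof. by move=> h; apply/mnm_lepP => j; rewrite mnm1E; case: eqP => [<-|]. Qed.

Lemma classify (q : {mpoly k[n]}) (P : pred 'I_n) : q \is d.+1.-homog ->
  (forall i j, P i -> ~~ P j -> q^`M(i)^`M(j) = 0) ->
  forall m, m \in msupp q -> ~~ [forall i, ~~ P i ==> (m i == 0%N)] ->
  forall i, P i -> m i = 0%N.
Proof.
move=> hq hd m hm /forallPn [i]; rewrite negb_imply => /andP[hPi hmi] j hPj.
apply/eqP; apply: contraT => hmj; exfalso.
have hmd : mdeg m = d.+1 := (dhomogP _ _ _ hq) m hm.
have hij : i != j by apply: contraNneq hPi => ->.
set m1 := (m - U_(j))%MM.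
have e1 : (m1 + U_(j))%MM = m by rewrite submK // le_U // lt0n.
have hm1i : m1 i = m i by rewrite mnmBE mnm1E eq_sym (negbTE hij) subn0.
have e2 : (m1 - U_(i) + U_(i))%MM = m1 by rewrite submK // le_U // hm1i lt0n.
have := congr1 (mcoeff (m1 - U_(i))%MM) (hd j i hPj hPi).
rewrite mcoeff_deriv e2 mcoeff_deriv e1 mcoeff0.
rewrite mnmBE mnm1E eqxx hm1i subn1 prednK ?lt0n //.
rewrite /m1 mnmBE mnm1E eqxx subn1 prednK ?lt0n //.
rewrite -mulrnA -mulr_natr => /eqP.
have hb : forall t, (m t <= d.+1)%N by move=> t; rewrite -hmd mnm_le_mdeg.
rewrite natrM !mulf_eq0 (negbTE (natk_neq0 Hchar _)); last by rewrite lt0n hmj hb.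
rewrite (negbTE (natk_neq0 Hchar _)); last by rewrite lt0n hmi hb.
by rewrite !orbF; move: hm; rewrite mcoeff_msupp => /negbTE ->.
Qed.

Lemma DS_build (q : {mpoly k[n]}) (P : pred 'I_n) : q \is d.+1.-homog ->
  (forall i j, P i -> ~~ P j -> q^`M(i)^`M(j) = 0) ->
  exists f1 f2 : {mpoly k[n]}, f1 \is d.+1.-homog /\ f2 \is d.+1.-homog /\
    vars_in P f1 /\ vars_in (predC P) f2 /\ q = f1 + f2.
Proof.
move=> hq hd.
pose inP (m : 'X_{1..n}) := [forall i, ~~ P i ==> (m i == 0%N)].
exists (\sum_(m <- msupp q | inP m) q@_m *: 'X_[m]).
exists (\sum_(m <- msupp q | ~~ inP m) q@_m *: 'X_[m]).
have hdeg : forall m, m \in msupp q -> mdeg m = d.+1 := dhomogP _ _ _ hq.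
split.
  by apply/dhomogP => m /msupp_filt /andP[/hdeg].
split.
  by apply/dhomogP => m /msupp_filt /andP[/hdeg].
split.
  move=> m /msupp_filt /andP[_ /forallP h] i hi; apply/eqP.
  by have := h i; rewrite hi.
split.
  move=> m /msupp_filt /andP[hm hn] i; rewrite /= negbK => hi.
  exact: (classify hq hd hm hn).
by rewrite {1}[q]mpolyE (bigID inP).
Qed.
End DS.

Section NC.
Variables (k : fieldType) (n' d : nat).
Local Notation n := n'.+1.
Hypothesis Hchar : forall p : nat, p \in [pchar k] -> ~~ (p %| (d.+1)`!)%N.

Lemma vars_deriv0 (Q : pred 'I_n) (q : {mpoly k[n]}) i :
  vars_in Q q -> ~~ Q i -> q^`M(i) = 0.
Proof.
move=> hv hi; rewrite /mderiv big_seq big1 // => m hm.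
by rewrite (hv m hm i hi) mul0r scale0r.
Qed.

Lemma nonconcise (f : {mpoly k[n]}) (A : 'M[k]_n) (Q : pred 'I_n) i0 :
  f \is d.+1.-homog -> A \in unitmx -> vars_in Q (lin_change A f) -> ~~ Q i0 ->
  (2 <= n)%N -> LDS d f.
Proof.
move=> hf hA hv hi0 hn.
set s : {perm 'I_n} := tperm ord0 i0.
set q := lin_change A f.
have hq : q \is d.+1.-homog by apply: homog_lin_change.
have hq' : lin_change (perm_mx s) q \is d.+1.-homog by apply: homog_lin_change.
exists 1%N, (A *m perm_mx s), 0, (lin_change (perm_mx s) q).
split => //; split; first by rewrite muln1.
split; first by rewrite unitmx_mul hA unitmx_perm.
split; first exact: dhomog0.
split; first exact: hq'.
split; first by move=> m; rewrite msupp0.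
split.
  apply: (deriv0_vars Hchar (e := d.+1)) => // t0; rewrite -ltnNge ltnS leqn0 => /eqP ht0.
  rewrite lin_changeE lin_deriv big1 // => l _.
  rewrite !mxE.
  have [->|hl] := eqVneq l i0.
    by rewrite (vars_deriv0 hv hi0) raddf0 mulr0.
  suff -> : (s l == t0) = false by rewrite mul0r.
  apply/negbTE; rewrite /s; apply: contra hl => /eqP h.
  have : s l = ord0 by apply: val_inj; rewrite /= h ht0.
  rewrite /s; move/(congr1 (tperm ord0 i0)); rewrite tpermK tpermL => ->.
  by [].
rewrite -lin_change_comp big1 ?add0r // => i _; rewrite big1 // => j _.
by rewrite mderiv0 mulr0.
Qed.
End NC.

Unset Implicit Arguments.
Set Strict Implicit.

Theorem proposition3p3 (k : closedFieldType) (n d : nat)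
  (Hchar : forall p : nat, p \in [pchar k] -> ~~ (p %| (d.+1)`!)%N)
  (f g : {mpoly k[n]})
  (Hf : f \is d.+1.-homog) (Hg : g \is d.+1.-homog)
  (Hf0 : f != 0) (Hg0 : g != 0)
  (Hsub : grad_span_sub g f) :
  (exists lambda : k, g = lambda *: f) \/ LDS d f \/ direct_sum d f.
Proof.
case: n f g Hf Hg Hf0 Hg0 Hsub => [|n'] f g Hf Hg Hf0 Hg0 Hsub.
  by exfalso; move: Hf0; rewrite (deriv0_zero Hchar Hf) ?eqxx // => -[].
have [c hc] := fin_all_exists Hsub.
set C := \matrix_(i, j) c i j.
have hsC : symK f C by apply: symK_grad.
case: (case_split C) => [[mu hmu] | [[q [hE [hE0 hE1]]] | [q [hN0 hNN]]]].
- left; exists mu; apply/eqP; rewrite -subr_eq0; apply/eqP.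
  apply: (deriv0_zero Hchar); first by apply: rpredB => //; apply: rpredZ.
  move=> i; rewrite mderivB mderivZ hc (bigD1 i) //= big1 ?addr0.
    have -> : c i i = mu by have := congr1 (fun M : 'M[k]_n'.+1 => M i i) hmu; rewrite /C !mxE eqxx.
    by rewrite subrr.
  move=> j hj; have -> : c i j = 0.
    by have := congr1 (fun M : 'M[k]_n'.+1 => M i j) hmu; rewrite /C !mxE eq_sym (negbTE hj).
  by rewrite scale0r.
- set E := horner_mx C q in hE hE0 hE1.
  have hsE : symK f E by apply: symK_poly.
  have hE' : E *m E = E by rewrite mulmxE.
  have [B [P [hB hrows]]] := idem_form hE'.
  have hBE := Dmx_rel hrows.
  have hsA : symK (lin_change B^T f) (Dmx k P).
    by apply: (symK_transport hsE); rewrite trmxK.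
  have hq : lin_change B^T f \is d.+1.-homog by apply: homog_lin_change.
  have hmix := D_conseq hsA.
  have [r1 hr1] : exists r, P r.
    apply/existsP; apply: contraNT hE0; rewrite negb_exists => /forallP hP.
    have h0 : B *m E = 0.
      by apply/row_matrixP => r; rewrite row_mul hrows row0 (negbTE (hP r)).
    by rewrite -[E](mulKmx hB) h0 mulmx0.
  have [r2 hr2] : exists r, ~~ P r.
    apply/existsP; apply: contraNT hE1; rewrite negb_exists => /forallP hP.
    have h0 : B *m E = B.
      by apply/row_matrixP => r; rewrite row_mul hrows; have := hP r; rewrite negbK => ->.
    by rewrite -[E](mulKmx hB) h0 mulVmx.
  have hn : (2 <= n'.+1)%N.
    have hr : val r1 != val r2.
      by apply: contraNneq hr2 => h; rewrite (_ : r2 = r1) //; apply: val_inj.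
    rewrite ltnS lt0n; apply: contraNneq hr => hn0.
    apply/eqP; rewrite /=; have := ltn_ord r1; have := ltn_ord r2; lia.
  have [f1 [f2 [hf1 [hf2 [hv1 [hv2 he]]]]]] := DS_build Hchar hq hmix.
  have hBt : B^T \in unitmx by rewrite unitmx_tr.
  have [f10|f10] := eqVneq f1 0.
    right; left; apply: (nonconcise Hchar (Q := predC P) (i0 := r1) Hf hBt) => //.
      by rewrite he f10 add0r.
    by rewrite /= negbK.
  have [f20|f20] := eqVneq f2 0.
    right; left; apply: (nonconcise Hchar (Q := P) (i0 := r2) Hf hBt) => //.
    by rewrite he f20 addr0.
  right; right; exists B^T, P, f1, f2; do !split => //.
- set N := horner_mx C q in hN0 hNN.
  have hsN : symK f N by apply: symK_poly.
  have hN' : N *m N = 0 by rewrite mulmxE.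
  have [l [B [hl [h2l [hB [H1 H2]]]]]] := sqz_form hN'.
  have hBN := Smx_rel H1 H2.
  have hsA : symK (lin_change B^T f) (Smx k n'.+1 l).
    by apply: (symK_transport hsN); rewrite trmxK.
  have hq : lin_change B^T f \is d.+1.-homog by apply: homog_lin_change.
  have [ha hb hc'] := S_conseq hsA h2l.
  have l0 : (0 < l)%N by rewrite hl lt0n mxrank_eq0.
  have [H [G [hH [hG [hvH [hvG he]]]]]] := LDS_build Hchar hq l0 h2l ha hb hc'.
  right; left; exists l, B^T, H, G; do !split => //.
  by rewrite unitmx_tr.
Qed.
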